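(* Let $X$ be a metric space and $\mathcal G\subseteq\mathcal H(X)$ a subgroup. If $X$ is $\mathcal G$-shift-compact, then $X$ is a Baire space.
   Context: $(X,d^X)$ is a metric space. $\mathcal H(X)$ is the group (under composition) of autohomeomorphisms $h$ of $X$ with $\sup_{x\in X}d^X(h(x),x)<\infty$. For a subgroup $\mathcal G$ of the autohomeomorphism group of $X$, $X$ is $\mathcal G$-shift-compact if for any convergent sequence $x_n\to x_0$ in $X$, any open $U\subseteq X$ and any set $T$ with the Baire property that is co-meagre in $U$, there is $g\in\mathcal G$ with $g(x_n)\in T\cap U$ for all $n$ in some infinite set (along a subsequence). *)

(* Defs.v *)
From Stdlib Require Import Reals Classical.
Open Scope R_scope.

Section MetricDefs.
Context {X : Type} (d : X -> X -> R).

Definition is_metric : Prop :=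
  (forall x y, 0 <= d x y) /\
  (forall x y, d x y = 0 <-> x = y) /\
  (forall x y, d x y = d y x) /\
  (forall x y z, d x z <= d x y + d y z).

Definition ball (x : X) (r : R) : X -> Prop := fun y => d x y < r.

Definition is_open (U : X -> Prop) : Prop :=
  forall x, U x -> exists r, 0 < r /\ (forall y, ball x r y -> U y).

Definition closure (A : X -> Prop) : X -> Prop :=
  fun x => forall r, 0 < r -> exists y, A y /\ d x y < r.

Definition nowhere_dense (A : X -> Prop) : Prop :=
  forall V, is_open V -> (forall y, V y -> closure A y) -> forall y, ~ V y.

Definition meagre (A : X -> Prop) : Prop :=
  exists N : nat -> (X -> Prop),
    (forall n, nowhere_dense (N n)) /\
    (forall x, A x -> exists n, N n x).

Definition baire_property (A : X -> Prop) : Prop :=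
  exists V, is_open V /\
    meagre (fun x => (A x /\ ~ V x) \/ (V x /\ ~ A x)).

Definition comeagre_in (T U : X -> Prop) : Prop :=
  meagre (fun x => U x /\ ~ T x).

Definition baire_space : Prop :=
  forall U, is_open U -> (exists x, U x) -> ~ meagre U.

Definition converges (x : nat -> X) (x0 : X) : Prop :=
  forall eps, 0 < eps -> exists N, forall n, (N <= n)%nat -> d (x n) x0 < eps.

Definition continuous_map (f : X -> X) : Prop :=
  forall x eps, 0 < eps -> exists delta, 0 < delta /\
    forall y, d x y < delta -> d (f x) (f y) < eps.

Definition autohomeo (h : X -> X) : Prop :=
  continuous_map h /\
  exists g : X -> X, continuous_map g /\
    (forall x, g (h x) = x) /\ (forall x, h (g x) = x).

Definition in_H (h : X -> X) : Prop :=
  autohomeo h /\ exists M, forall x, d (h x) x <= M.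

Definition subgroup_of_H (G : (X -> X) -> Prop) : Prop :=
  (forall h, G h -> in_H h) /\
  G (fun x => x) /\
  (forall g h, G g -> G h -> G (fun x => g (h x))) /\
  (forall h, G h -> exists g, G g /\
      (forall x, g (h x) = x) /\ (forall x, h (g x) = x)).

Definition shift_compact (G : (X -> X) -> Prop) : Prop :=
  forall (x : nat -> X) (x0 : X), converges x x0 ->
  forall U : X -> Prop, is_open U -> (exists y, U y) ->
  forall T : X -> Prop, baire_property T -> comeagre_in T U ->
  exists g, G g /\
    (forall N, exists n, (N <= n)%nat /\ T (g (x n)) /\ U (g (x n))).

End MetricDefs.

(* Main.v *)
Require Import Defs.
From Stdlib Require Import Reals Lra.
Open Scope R_scope.

Theorem propositionB1 (X : Type) (d : X -> X -> R) (G : (X -> X) -> Prop) :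
  is_metric d -> subgroup_of_H d G -> shift_compact d G -> baire_space d.
Proof.
  intros [_ [Hd0 _]] _ Hsc U HU [x0 Ux0] HM.
  assert (Hconv : converges d (fun _ => x0) x0).
  { intros eps Heps. exists 0%nat. intros n _.
    rewrite (proj2 (Hd0 x0 x0) eq_refl). exact Heps. }
  assert (Hempty : meagre d (fun x : X => (False /\ ~ (fun _ => False) x) \/ ((fun _ => False) x /\ ~ False))).
  { exists (fun _ _ => False). split.
    - intros n V _ Hcl y Vy. destruct (Hcl y Vy 1 ltac:(lra)) as [z [[] _]].
    - intros x [[[] _]|[[] _]]. }
  assert (Hbp : baire_property d (fun _ : X => False)).
  { exists (fun _ => False). split.
    - intros x [].
    - exact Hempty. }
  assert (Hcm : comeagre_in d (fun _ : X => False) U).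
  { destruct HM as [N [HN HU']]. exists N. split; [exact HN|].
    intros x [Ux _]. exact (HU' x Ux). }
  destruct (Hsc (fun _ => x0) x0 Hconv U HU (ex_intro _ x0 Ux0) (fun _ => False) Hbp Hcm)
    as [g [_ Hg]].
  destruct (Hg 0%nat) as [n [_ [[] _]]].
Qed.
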